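(* Let $d\ge0$ and $n>d$ be integers and let $T,T'\in L(n,d)$ with $T<T'$. Then for each $T_i\in T$ there exists a unique $T'_j\in T'$ such that $T'_j\subset T_i$.
   Context: For a finite set $X$ let $\operatorname{codim}_d(X)=d+1-|X|$. For a finite collection $\{T_1,\dots,T_l\}$ of pairwise distinct finite sets put $\rho_d(\{T_1,\dots,T_l\})=\sum_{i=1}^l\operatorname{codim}_d(T_i)$ (with $\rho_d(\emptyset)=0$) and $D_d(\{T_1,\dots,T_l\})=\operatorname{codim}_d(T_1\cap\cdots\cap T_l)-\rho_d(\{T_1,\dots,T_l\})$. For integers $d\ge0$, $n>d$, $L(n,d)$ is the set of all collections $T$ of subsets of $\{1,\dots,n\}$ such that (i) $D_d(T')>0$ for every $T'\subset T$ with $|T'|>1$, and (ii) $0\le|T_i|\le d$ for every $T_i\in T$. It is partially ordered by: $T<T'$ iff $\rho_d(T)<\rho_d(T')$ and for every $T_i\in T$ there exists $T'_j\in T'$ with $T'_j\subset T_i$. *)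

(* Defs.v *)
From mathcomp Require Import all_boot all_order all_algebra.
Set Implicit Arguments. Unset Strict Implicit. Unset Printing Implicit Defensive.
Import GRing.Theory Num.Theory.
Local Open Scope ring_scope.

(* Ground set {1,...,n} is modelled by 'I_n = {0,...,n-1}.
   A collection of pairwise distinct subsets is a {set {set 'I_n}}. *)

Definition codim (n d : nat) (X : {set 'I_n}) : int :=
  (d.+1)%:Z - (#|X|)%:Z.

Definition rho (n d : nat) (T : {set {set 'I_n}}) : int :=
  \sum_(X in T) codim d X.

Definition Dd (n d : nat) (T : {set {set 'I_n}}) : int :=
  codim d (\bigcap_(X in T) X) - rho d T.

Definition inL (n d : nat) (T : {set {set 'I_n}}) : Prop :=
  (forall T' : {set {set 'I_n}}, T' \subset T -> (1 < #|T'|)%N -> 0 < Dd d T')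
  /\ (forall X, X \in T -> (#|X| <= d)%N).

Definition Lt (n d : nat) (T T' : {set {set 'I_n}}) : Prop :=
  rho d T < rho d T' /\
  (forall Ti, Ti \in T -> exists2 Tj, Tj \in T' & Tj \subset Ti).

(* Main.v *)
Require Import Defs.
From mathcomp Require Import all_boot all_order all_algebra.
From mathcomp Require Import zify.

Theorem proposition3p3 (d n : nat) (hdn : (d < n)%N)
  (T T' : {set {set 'I_n}}) (hT : inL d T) (hT' : inL d T') (hlt : Lt d T T') :
  forall Ti, Ti \in T -> exists! Tj, Tj \in T' /\ Tj \subset Ti.
Proof.
move=> Ti HTi.
have [Tj HTj sub] := hlt.2 Ti HTi.
exists Tj; split; first by split.
move=> B [HB subB].
apply/eqP; apply/negP => /eqP neq.
have H2 := hT'.1 [set Tj; B].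
have hsub : [set Tj; B] \subset T'.
  by apply/subsetP => x; rewrite !inE => /orP [] /eqP ->.
have hcard : (1 < #|[set Tj; B]|)%N by rewrite cards2; move: neq; case: (Tj == B).

have := H2 hsub hcard.
rewrite /Dd /rho.
have nin : Tj \notin [set B] by rewrite inE; move: neq; case: (Tj == B).
rewrite big_setU1 //= big_set1 big_setU1 //= big_set1 /codim.
have hU := cardsUI Tj B.
have hle : (#|Tj :|: B| <= #|Ti|)%N by apply: subset_leq_card; rewrite subUset sub subB.
have hTi := hT.2 Ti HTi.
move=> h.
have : (#|Tj| + #|B| > d.+1 + #|Tj :&: B|)%N.
  move: h; rewrite -!(@ltz_nat) => h; lia.
lia.
Qed.
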